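(* Let $L$ be a finite modular lattice with exactly two coatoms and $U$ a finite modular lattice with exactly two atoms. Then any vertical 2-sum $L +_2 U$ is a modular lattice.
   Context: Let $L' = L \setminus \{\top_L\}$ and $U' = U \setminus \{\bot_U\}$. A vertical 2-sum $L +_2 U$ is the poset obtained from the disjoint union of $L'$ and $U'$ by identifying the two coatoms of $L$ with the two atoms of $U$ via some bijection; $x \le y$ iff $x,y \in L'$ and $x \le_L y$, or $x,y \in U'$ and $x \le_U y$, or $x \in L'$, $y \in U'$ and there is an identified element $c$ with $x \le_L c$ and $c \le_U y$. (This poset is a lattice.) *)

(* Defs.v *)
From mathcomp Require Import all_boot all_order.
Set Implicit Arguments. Unset Strict Implicit. Unset Printing Implicit Defensive.
Import Order.Theory.
Local Open Scope order_scope.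

Definition modular {d} (T : latticeType d) : Prop :=
  forall x y z : T, x <= z -> x `|` (y `&` z) = (x `|` y) `&` z.

Definition coatom {d} {T : tbLatticeType d} (c : T) : Prop :=
  c < \top /\ ~ (exists x : T, c < x /\ x < \top).

Definition atom {d} {T : tbLatticeType d} (a : T) : Prop :=
  \bot < a /\ ~ (exists x : T, \bot < x /\ x < a).

Section VSum.
Context {d1 d2 : Order.disp_t} {L : finTBLatticeType d1} {U : finTBLatticeType d2}.
(* Identification: coatom c1 of L <-> atom a1 of U, coatom c2 <-> atom a2.
   The identified elements are represented on the L side. *)
Variables (c1 c2 : L) (a1 a2 : U).

Definition vsum2_carrier (p : L + U) : bool :=
  match p with
  | inl x => x != \top
  | inr u => [&& u != \bot, u != a1 & u != a2]
  end.

Definition vsum2_le (p q : L + U) : bool :=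
  match p, q with
  | inl x, inl y => x <= y
  | inr u, inr v => u <= v
  | inl x, inr v => ((x <= c1) && (a1 <= v)) || ((x <= c2) && (a2 <= v))
  | inr _, inl _ => false
  end.
End VSum.

Definition is_lub {T : Type} (S : T -> Prop) (le : T -> T -> Prop) (x y j : T) :=
  S j /\ le x j /\ le y j /\ (forall k, S k -> le x k -> le y k -> le j k).

Definition is_glb {T : Type} (S : T -> Prop) (le : T -> T -> Prop) (x y m : T) :=
  S m /\ le m x /\ le m y /\ (forall k, S k -> le k x -> le k y -> le k m).

Definition modular_lattice_on {T : Type} (S : T -> Prop) (le : T -> T -> Prop) : Prop :=
  (forall x, S x -> le x x) /\
  (forall x y, S x -> S y -> le x y -> le y x -> x = y) /\
  (forall x y z, S x -> S y -> S z -> le x y -> le y z -> le x z) /\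
  (forall x y, S x -> S y -> exists j, is_lub S le x y j) /\
  (forall x y, S x -> S y -> exists m, is_glb S le x y m) /\
  (forall x y z m j k l, S x -> S y -> S z -> le x z ->
     is_glb S le y z m -> is_lub S le x m k ->
     is_lub S le x y j -> is_glb S le j z l -> k = l).

(* Main.v *)
Require Import Defs.
From mathcomp Require Import all_boot all_order.
Import Order.Theory.
Local Open Scope order_scope.

Lemma below_coatom {d} (L : finTBLatticeType d) (x : L) :
  x != \top -> exists2 c : L, coatom c & x <= c.
Proof.
have H : forall (n : nat) (x : L), (#|[set y : L | (x < y)%O]| < n)%N -> x != \top ->
    exists2 c : L, coatom c & x <= c.
  elim=> [//|n IH] z Hn Hz.
  case: (boolP [exists y, (z < y) && (y < \top)]).
  - move/existsP=> [y /andP[zy yt]].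
    have Hy : y != \top by rewrite lt_eqF.
    have [|c Hc yc] := IH y _ Hy.
      rewrite ltnS in Hn; apply: (leq_trans _ Hn); apply: proper_card; apply/properP; split.
        by apply/subsetP => w; rewrite !inE => yw; apply: lt_trans zy yw.
      by exists y; rewrite !inE ?ltxx.
    by exists c => //; apply: le_trans (ltW zy) yc.
  - move=> Hn'; exists z => //; split; first by rewrite lt_neqAle Hz lex1.
    move=> [y [zy yt]]; apply: (negP Hn'); apply/existsP; exists y; by rewrite zy yt.
exact: H.
Qed.

Lemma above_atom {d} (L : finTBLatticeType d) (x : L) :
  x != \bot -> exists2 c : L, atom c & c <= x.
Proof.
have H : forall (n : nat) (x : L), (#|[set y : L | (y < x)%O]| < n)%N -> x != \bot ->
    exists2 c : L, atom c & c <= x.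
  elim=> [//|n IH] z Hn Hz.
  case: (boolP [exists y, (\bot < y) && (y < z)]).
  - move/existsP=> [y /andP[yb zy]].
    have Hy : y != \bot by rewrite gt_eqF.
    have [|c Hc yc] := IH y _ Hy.
      rewrite ltnS in Hn; apply: (leq_trans _ Hn); apply: proper_card; apply/properP; split.
        by apply/subsetP => w; rewrite !inE => yw; apply: lt_trans yw zy.
      by exists y; rewrite !inE ?ltxx.
    by exists c => //; apply: le_trans yc (ltW zy).
  - move=> Hn'; exists z => //; split; first by rewrite lt_def Hz le0x.
    move=> [y [zy yt]]; apply: (negP Hn'); apply/existsP; exists y; by rewrite zy yt.
exact: H.
Qed.

Lemma modN5 {d} {T : latticeType d} {x y z : T} : modular T ->
  x <= z -> x `&` y = z `&` y -> x `|` y = z `|` y -> x = z.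
Proof.
move=> mT xz Hm Hj; have := mT x y z xz.
by rewrite Hj [y `&` z]meetC -Hm meetKU meetC joinKI.
Qed.

Lemma coatom_ne {d} {T : tbLatticeType d} {c : T} : coatom c -> c != \top.
Proof. by move=> [h _]; rewrite lt_eqF. Qed.

Lemma coatom_eq {d} {T : tbLatticeType d} {c x : T} : coatom c -> c <= x -> x != \top -> x = c.
Proof.
move=> [_ h] cx xt; move: cx; rewrite le_eqVlt => /orP[/eqP -> //|cx].
by exfalso; apply: h; exists x; rewrite cx lt_neqAle xt lex1.
Qed.

Lemma coatom_join {d} {T : tbLatticeType d} {c x : T} : coatom c -> ~~ (x <= c) -> x `|` c = \top.
Proof.
move=> hc xc; apply/eqP; apply: contraNT xc => H.
by rewrite -(coatom_eq hc (leUr c x) H) leUl.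
Qed.

Lemma atom_ne {d} {T : tbLatticeType d} {a : T} : atom a -> a != \bot.
Proof. by move=> [h _]; rewrite gt_eqF. Qed.

Lemma atom_eq {d} {T : tbLatticeType d} {a x : T} : atom a -> x <= a -> x != \bot -> x = a.
Proof.
move=> [_ h] cx xt; move: cx; rewrite le_eqVlt => /orP[/eqP -> //|cx].
by exfalso; apply: h; exists x; rewrite cx lt_def xt le0x.
Qed.

Lemma atom_meet {d} {T : tbLatticeType d} {a x : T} : atom a -> ~~ (a <= x) -> a `&` x = \bot.
Proof.
move=> ha xc; apply/eqP; apply: contraNT xc => H.
by rewrite -(atom_eq ha (leIl a x) H) leIr.
Qed.

Section Main.
Context {d1 d2 : Order.disp_t} (L : finTBLatticeType d1) (U : finTBLatticeType d2)
  (c1 c2 : L) (a1 a2 : U).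
Hypotheses (modL : modular L) (modU : modular U)
  (c12 : c1 != c2) (hc1 : coatom c1) (hc2 : coatom c2)
  (hcs : forall c : L, coatom c -> c = c1 \/ c = c2)
  (a12 : a1 != a2) (ha1 : atom a1) (ha2 : atom a2)
  (has : forall a : U, atom a -> a = a1 \/ a = a2).

Lemma cover_L {x : L} : x != \top -> (x <= c1) || (x <= c2).
Proof. by move=> /below_coatom[c /hcs[]-> ->]; rewrite ?orbT. Qed.

Lemma cover_U {v : U} : v != \bot -> (a1 <= v) || (a2 <= v).
Proof. by move=> /above_atom[c /has[]-> ->]; rewrite ?orbT. Qed.

Lemma nc12 : ~~ (c1 <= c2).
Proof. by apply/negP => H; move: c12; rewrite (coatom_eq hc1 H (coatom_ne hc2)) eqxx. Qed.
Lemma nc21 : ~~ (c2 <= c1).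
Proof. by apply/negP => H; move: c12; rewrite (coatom_eq hc2 H (coatom_ne hc1)) eqxx. Qed.
Lemma na12 : ~~ (a1 <= a2).
Proof. by apply/negP => H; move: a12; rewrite (atom_eq ha2 H (atom_ne ha1)) eqxx. Qed.
Lemma na21 : ~~ (a2 <= a1).
Proof. by apply/negP => H; move: a12; rewrite (atom_eq ha1 H (atom_ne ha2)) eqxx. Qed.

Definition inU (v : U) := [&& v != \bot, v != a1 & v != a2].
Definition psi (x : L) : U :=
  if x <= c1 then (if x <= c2 then \bot else a1) else (if x <= c2 then a2 else \top).
Definition chi (v : U) : L :=
  if a1 <= v then (if a2 <= v then \top else c1) else (if a2 <= v then c2 else \bot).

Lemma inU_up {v w} : inU v -> v <= w -> inU w.
Proof.
move=> /and3P[v0 v1 v2] vw; apply/and3P; split.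
- by apply: contraNneq v0 => E; rewrite -lex0 -E.
- by apply: contraNneq v1 => E; rewrite E in vw; rewrite (atom_eq ha1 vw v0).
- by apply: contraNneq v2 => E; rewrite E in vw; rewrite (atom_eq ha2 vw v0).
Qed.

Lemma inU_both {w} : a1 <= w -> a2 <= w -> inU w.
Proof.
move=> h1 h2; apply/and3P; split.
- by apply: contraTneq h1 => ->; rewrite lex0 (atom_ne ha1).
- by apply: contraTneq h2 => ->; rewrite na21.
- by apply: contraTneq h1 => ->; rewrite na12.
Qed.

Lemma ne_top_le {x y : L} : x != \top -> y <= x -> y != \top.
Proof. by move=> Hx Hy; apply: contraNneq Hx => E; rewrite -le1x -E. Qed.

Lemma chi_tt {v} : a1 <= v -> a2 <= v -> chi v = \top.
Proof. by rewrite /chi => -> ->. Qed.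
Lemma chi_tf {v} : a1 <= v -> ~~ (a2 <= v) -> chi v = c1.
Proof. by rewrite /chi => -> /negbTE ->. Qed.
Lemma chi_ft {v} : ~~ (a1 <= v) -> a2 <= v -> chi v = c2.
Proof. by rewrite /chi => /negbTE -> ->. Qed.
Lemma psi_tt {x} : x <= c1 -> x <= c2 -> psi x = \bot.
Proof. by rewrite /psi => -> ->. Qed.
Lemma psi_tf {x} : x <= c1 -> ~~ (x <= c2) -> psi x = a1.
Proof. by rewrite /psi => -> /negbTE ->. Qed.
Lemma psi_ft {x} : ~~ (x <= c1) -> x <= c2 -> psi x = a2.
Proof. by rewrite /psi => /negbTE -> ->. Qed.

Lemma chi_top {v} : inU v -> chi v = \top -> (a1 <= v) && (a2 <= v).
Proof.
move=> /and3P[v0 _ _]; have := cover_U v0; rewrite /chi.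
case: (a1 <= v); case: (a2 <= v) => //= _ E.
- by move: (coatom_ne hc1); rewrite E eqxx.
- by move: (coatom_ne hc2); rewrite E eqxx.
Qed.

Lemma le_lr_chi x v : x != \top -> inU v ->
  ((x <= c1) && (a1 <= v)) || ((x <= c2) && (a2 <= v)) = (x <= chi v).
Proof.
move=> Hx /and3P[v0 _ _]; have := cover_U v0; rewrite /chi.
case: (a1 <= v); case: (a2 <= v) => //= _; rewrite ?andbT ?andbF ?orbF ?lex1 //.
exact: cover_L.
Qed.

Lemma le_lr_psi x v : x != \top -> inU v ->
  ((x <= c1) && (a1 <= v)) || ((x <= c2) && (a2 <= v)) = (psi x <= v).
Proof.
move=> Hx /and3P[v0 _ _]; have := cover_L Hx; rewrite /psi.
case: (x <= c1); case: (x <= c2) => //= _; rewrite ?orbF ?le0x //.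
exact: cover_U.
Qed.


Local Notation le := (vsum2_le c1 c2 a1 a2).
Local Notation S := (vsum2_carrier a1 a2).

Definition J (p q : L + U) : L + U :=
  match p, q with
  | inl x, inl y => if x `|` y == \top then inr (a1 `|` a2) else inl (x `|` y)
  | inl x, inr v => inr (psi x `|` v)
  | inr u, inl y => inr (u `|` psi y)
  | inr u, inr v => inr (u `|` v)
  end.

Definition M (p q : L + U) : L + U :=
  match p, q with
  | inl x, inl y => inl (x `&` y)
  | inl x, inr v => inl (x `&` chi v)
  | inr u, inl y => inl (chi u `&` y)
  | inr u, inr v => if inU (u `&` v) then inr (u `&` v) else inl (chi u `&` chi v)
  end.

Lemma J_lub p q : S p -> S q -> is_lub S le p q (J p q).
Proof.
case: p => [x|u]; case: q => [y|v] /= Hp Hq.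
- case: eqP => E.
  + split; first exact: inU_both (leUl _ _) (leUr _ _).
    rewrite /= !le_lr_chi ?chi_tt ?lex1 ?leUl ?leUr //; try exact: inU_both (leUl _ _) (leUr _ _).
    split => //; split => //.
    move=> [z|w] /= Hk H1 H2.
    * have : x `|` y <= z by rewrite leUx H1 H2.
      by rewrite E le1x => /eqP Ez; rewrite Ez eqxx in Hk.
    * rewrite !le_lr_chi // in H1 H2.
      have : x `|` y <= chi w by rewrite leUx H1 H2.
      rewrite E le1x => /eqP /(chi_top Hk) /andP[h1 h2].
      by rewrite leUx h1 h2.
  + split; first by apply/eqP.
    split; first exact: leUl.
    split; first exact: leUr.
    move=> [z|w] /= Hk H1 H2; first by rewrite leUx H1 H2.
    rewrite !le_lr_chi // in H1 H2 *; last by apply/eqP.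
    by rewrite leUx H1 H2.
- have Hj : inU (psi x `|` v) := inU_up Hq (leUr _ _).
  split => //; split; first by rewrite /= le_lr_psi // leUl.
  split; first by rewrite /= leUr.
  move=> [z|w] //= Hk H1 H2.
  rewrite le_lr_psi // in H1.
  by rewrite leUx H1 H2.
- have Hj : inU (u `|` psi y) := inU_up Hp (leUl _ _).
  split => //; split; first by rewrite /= leUl.
  split; first by rewrite /= le_lr_psi // leUr.
  move=> [z|w] //= Hk H1 H2.
  rewrite le_lr_psi // in H2.
  by rewrite leUx H1 H2.
- have Hj : inU (u `|` v) := inU_up Hp (leUl _ _).
  split => //; split; first by rewrite /= leUl.
  split; first by rewrite /= leUr.
  move=> [z|w] //= Hk H1 H2.
  by rewrite leUx H1 H2.
Qed.

Lemma M_glb p q : S p -> S q -> is_glb S le p q (M p q).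
Proof.
case: p => [x|u]; case: q => [y|v] /= Hp Hq.
- split; first exact: ne_top_le Hp (leIl _ _).
  split; first exact: leIl.
  split; first exact: leIr.
  by move=> [z|w] //= Hk H1 H2; rewrite lexI H1 H2.
- have Hm : x `&` chi v != \top := ne_top_le Hp (leIl _ _).
  split => //; split; first exact: leIl.
  split; first by rewrite /= le_lr_chi // leIr.
  move=> [z|w] //= Hk H1 H2.
  rewrite le_lr_chi // in H2.
  by rewrite lexI H1 H2.
- have Hm : chi u `&` y != \top := ne_top_le Hq (leIr _ _).
  split => //; split; first by rewrite /= le_lr_chi // leIl.
  split; first exact: leIr.
  move=> [z|w] //= Hk H1 H2.
  rewrite le_lr_chi // in H1.
  by rewrite lexI H1 H2.
- case: ifP => Hm.
  + split => //; split; first by rewrite /= leIl.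
    split; first by rewrite /= leIr.
    move=> [z|w] //= Hk H1 H2; last by rewrite lexI H1 H2.
    rewrite !le_lr_psi // in H1 H2 *.
    by rewrite lexI H1 H2.
  + have Ht : chi u `&` chi v != \top.
      apply/eqP => E.
      have Eu : chi u = \top by apply/eqP; rewrite -le1x -E leIl.
      have Ev : chi v = \top by apply/eqP; rewrite -le1x -E leIr.
      move: (chi_top Hp Eu) (chi_top Hq Ev) => /andP[h1 h2] /andP[h3 h4].
      by move: Hm; rewrite inU_both // lexI ?h1 ?h2 ?h3 ?h4.
    split => //; split; first by rewrite /= le_lr_chi // leIl.
    split; first by rewrite /= le_lr_chi // leIr.
    move=> [z|w] /= Hk H1 H2.
    * rewrite !le_lr_chi // in H1 H2 *.
      by rewrite lexI H1 H2.
    * have : inU (u `&` v) by apply: inU_up Hk _; rewrite lexI H1 H2.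
      by rewrite Hm.
Qed.


Lemma psi_le1 {x} : x <= c1 -> psi x <= a1.
Proof. by rewrite /psi => ->; case: (x <= c2); rewrite ?le0x ?lexx. Qed.
Lemma psi_le2 {x} : x <= c2 -> psi x <= a2.
Proof. by rewrite /psi => ->; case: (x <= c1); rewrite ?le0x ?lexx. Qed.
Lemma psi_n1 {x} : x != \top -> ~~ (x <= c1) -> psi x = a2.
Proof.
move=> Hx h; apply: psi_ft => //; move: (cover_L Hx); by rewrite (negbTE h).
Qed.
Lemma psi_n2 {x} : x != \top -> ~~ (x <= c2) -> psi x = a1.
Proof.
move=> Hx h; apply: psi_tf => //; move: (cover_L Hx); by rewrite (negbTE h) orbF.
Qed.

Lemma notinU {u} : inU u = false -> [|| u == \bot, u == a1 | u == a2].
Proof. by move=> /negbT; rewrite /inU !negb_and !negbK. Qed.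

Lemma below_a12 {w} : inU w -> w <= a1 `|` a2 -> (a1 <= w) && (a2 <= w).
Proof.
move=> Hw wle; move: (Hw) => /and3P[w0 w1 w2].
case/orP: (cover_U w0) => h.
- have := modU _ a2 _ h; rewrite (meet_r wle).
  case: (boolP (a2 <= w)) => h2; first by rewrite h.
  by rewrite (atom_meet ha2 h2) joinx0 => E; move: w1; rewrite -E eqxx.
- have := modU _ a1 _ h; rewrite [a2 `|` a1]joinC (meet_r wle).
  case: (boolP (a1 <= w)) => h1; first by rewrite h.
  by rewrite (atom_meet ha1 h1) joinx0 => E; move: w2; rewrite -E eqxx.
Qed.

Lemma caseB {ci : L} {ai aj : U} {x z v} : coatom ci -> x <= z -> ai <= v -> ~~ (aj <= v) ->
  x `&` ci = z `&` ci -> psi x `|` v = psi z `|` v ->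
  (x <= ci -> psi x <= ai) -> (~~ (z <= ci) -> psi z = aj) -> x = z.
Proof.
move=> hc xz av ajv HM HJ P1 P2.
case: (boolP (x <= ci)) => xc.
- case: (boolP (z <= ci)) => zc; first by rewrite -(meet_l xc) -(meet_l zc) HM.
  have E : psi z `|` v = v by rewrite -HJ join_r // (le_trans (P1 xc) av).
  by move: ajv; rewrite -(P2 zc) -eq_joinr E eqxx.
- have zc : ~~ (z <= ci) by apply: contra xc => zc; exact: le_trans xz zc.
  apply: (modN5 modL xz HM).
  by rewrite (coatom_join hc xc) (coatom_join hc zc).
Qed.

Lemma caseC {ci cj : L} {ai aj : U} {x w v} :
  ~~ (cj <= ci) -> x <= ci -> ai <= w -> ~~ (ai <= v) -> chi v = cj ->
  (aj <= w -> chi w = \top) -> w `|` v = ai `|` v -> w != ai ->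
  [|| w `&` v == \bot, w `&` v == ai | w `&` v == aj] ->
  x `&` chi v = chi w `&` chi v -> False.
Proof.
move=> ncji xci aiw aiv Hcv Hcw HJ wai Hwv HM.
have Ew : ai `|` (v `&` w) = w by rewrite (modU _ v _ aiw) -HJ meetC joinKI.
rewrite meetC in Ew.
case/or3P: Hwv => /eqP E; rewrite E in Ew.
- by rewrite joinx0 in Ew; rewrite Ew eqxx in wai.
- have : ai <= v by rewrite -E leIr.
  by rewrite (negbTE aiv).
- have ajw : aj <= w by rewrite -E leIl.
  move: HM; rewrite Hcv (Hcw ajw) meet1x => /eqP; rewrite eq_meetr => cjx.
  by move: ncji; rewrite (le_trans cjx xci).
Qed.

Lemma N5P p q r : S p -> S q -> S r -> le p r -> M p q = M r q -> J p q = J r q -> p = r.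
Proof.
case: p => [x|u]; case: r => [z|w]; case: q => [y|v]; rewrite /M /J /= => Hp Hq Hr Hpr //.
-
  move=> [HM] HJ.
  have Hj : x `|` y = z `|` y.
    move: HJ; case: eqP => E1; case: eqP => E2 //; first by rewrite E1 E2.
    by case.
  by rewrite (modN5 modL Hpr HM Hj).
-
  move=> [HM] [HJ].
  move: (Hq) => /and3P[v0 _ _].
  case: (boolP (a1 <= v)) => h1; case: (boolP (a2 <= v)) => h2.
  + by rewrite chi_tt // !meetx1 in HM; rewrite HM.
  + rewrite chi_tf // in HM; congr inl.
    apply: (caseB hc1 Hpr h1 h2 HM HJ (@psi_le1 x) (psi_n1 Hr)).
  + rewrite chi_ft // in HM; congr inl.
    apply: (caseB hc2 Hpr h2 h1 HM HJ (@psi_le2 x) (psi_n2 Hr)).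
  + by move: (cover_U v0); rewrite (negbTE h1) (negbTE h2).
-
  move=> [HM]; case: eqP => // Exy [HJ]; exfalso.
  have Hw : w <= a1 `|` a2 by rewrite HJ leUl.
  have Hc : chi w = \top by move/andP: (below_a12 Hr Hw) => [h1 h2]; apply: chi_tt.
  rewrite Hc meet1x in HM.
  have yx : y <= x by rewrite -HM leIl.
  by move: Hp; rewrite -Exy join_l // eqxx.
-
  rewrite le_lr_psi // in Hpr.
  case: ifP => Hm // [HM] [HJ]; exfalso.
  have pv : ~~ (psi x <= v).
    apply/negP => pv.
    have wv : w <= v by rewrite -(join_r pv) HJ leUl.
    by move: Hm; rewrite (meet_l wv) => /negbT /negP; apply; exact: Hr.
  move: (Hq) (Hr) => /and3P[v0 _ _] /and3P[w0 w1 w2].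
  case: (boolP (x <= c1)) => xc1; case: (boolP (x <= c2)) => xc2.
  + by rewrite psi_tt // le0x in pv.
  + rewrite psi_tf // in pv Hpr HJ.
    have h2 : a2 <= v by move: (cover_U v0); rewrite (negbTE pv).
    apply: (caseC nc21 xc1 Hpr pv (chi_ft pv h2) (chi_tt Hpr) (esym HJ) w1 (notinU Hm) HM).
  + rewrite psi_ft // in pv Hpr HJ.
    have h1 : a1 <= v by move: (cover_U v0); rewrite (negbTE pv) orbF.
    apply: (caseC nc12 xc2 Hpr pv (chi_tf h1 pv) (fun h => chi_tt h Hpr) (esym HJ) w2 _ HM).
    by case/or3P: (notinU Hm) => ->; rewrite ?orbT.
  + by move: (cover_L Hp); rewrite (negbTE xc1) (negbTE xc2).
-
  move=> [HM] [HJ].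
  have Ew : u `|` (psi y `&` w) = w by rewrite (modU _ _ _ Hpr) HJ meetC joinKI.
  move: (Hp) => /and3P[u0 _ _].
  case: (boolP (y <= c1)) => yc1; case: (boolP (y <= c2)) => yc2.
  + by rewrite psi_tt // meet0x joinx0 in Ew; rewrite Ew.
  + rewrite psi_tf // in Ew.
    case: (boolP (a1 <= w)) => h1w; last by rewrite (atom_meet ha1 h1w) joinx0 in Ew; rewrite Ew.
    case: (boolP (a1 <= u)) => h1u.
      by rewrite -Ew join_l // (le_trans (leIl _ _) h1u).
    have h2u : a2 <= u by move: (cover_U u0); rewrite (negbTE h1u).
    move: HM; rewrite (chi_ft h1u h2u) (chi_tt h1w (le_trans h2u Hpr)) meet1x => E.
    by move: yc2; rewrite -E leIl.
  + rewrite psi_ft // in Ew.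
    case: (boolP (a2 <= w)) => h2w; last by rewrite (atom_meet ha2 h2w) joinx0 in Ew; rewrite Ew.
    case: (boolP (a2 <= u)) => h2u.
      by rewrite -Ew join_l // (le_trans (leIl _ _) h2u).
    have h1u : a1 <= u by move: (cover_U u0); rewrite (negbTE h2u) orbF.
    move: HM; rewrite (chi_tf h1u h2u) (chi_tt (le_trans h1u Hpr) h2w) meet1x => E.
    by move: yc1; rewrite -E leIl.
  + by move: (cover_L Hq); rewrite (negbTE yc1) (negbTE yc2).
-
  move=> HM [HJ]; move: HM.
  case: ifP => Hu; case: ifP => Hw // [HM].
  + by rewrite (modN5 modU Hpr HM HJ).
  + have Ew : u `|` (v `&` w) = w by rewrite (modU _ _ _ Hpr) HJ meetC joinKI.
    rewrite meetC in Ew.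
    move: (Hp) => /and3P[u0 _ _].
    case/or3P: (notinU Hw) => /eqP E; rewrite E in Ew.
    * by rewrite joinx0 in Ew; rewrite Ew.
    * case: (boolP (a1 <= u)) => h1u; first by rewrite -Ew join_l.
      exfalso.
      have h1w : a1 <= w by rewrite -E leIl.
      have h1v : a1 <= v by rewrite -E leIr.
      have h2u : a2 <= u by move: (cover_U u0); rewrite (negbTE h1u).
      move: HM; rewrite (chi_ft h1u h2u) (chi_tt h1w (le_trans h2u Hpr)) meet1x.
      case: (boolP (a2 <= v)) => h2v.
      - rewrite (chi_tt h1v h2v) meetx1 => E2.
        by move: (coatom_ne hc2); rewrite E2 eqxx.
      - rewrite (chi_tf h1v h2v) => /eqP; rewrite eq_meetr => H.
        by move: nc12; rewrite H.
    * case: (boolP (a2 <= u)) => h2u; first by rewrite -Ew join_l.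
      exfalso.
      have h2w : a2 <= w by rewrite -E leIl.
      have h2v : a2 <= v by rewrite -E leIr.
      have h1u : a1 <= u by move: (cover_U u0); rewrite (negbTE h2u) orbF.
      move: HM; rewrite (chi_tf h1u h2u) (chi_tt (le_trans h1u Hpr) h2w) meet1x.
      case: (boolP (a1 <= v)) => h1v.
      - rewrite (chi_tt h1v h2v) meetx1 => E2.
        by move: (coatom_ne hc1); rewrite E2 eqxx.
      - rewrite (chi_ft h1v h2v) => /eqP; rewrite eq_meetr => H.
        by move: nc21; rewrite H.
Qed.

Arguments J_lub {p q}.
Arguments M_glb {p q}.
Arguments N5P {p q r}.

Lemma main_thm : modular_lattice_on (fun p => vsum2_carrier a1 a2 p) (fun p q => vsum2_le c1 c2 a1 a2 p q).
Proof.
have anti : forall x y, S x -> S y -> le x y -> le y x -> x = y.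
  case=> [x|u]; case=> [y|v] /= _ _ h1 h2 //; f_equal; apply: le_anti; by rewrite h1 h2.
have trans : forall x y z, S x -> S y -> S z -> le x y -> le y z -> le x z.
  case=> [x|u]; case=> [y|v]; case=> [z|w] /= Sx Sy Sz h1 h2 //.
  - exact: le_trans h1 h2.
  - rewrite le_lr_chi // in h2; rewrite le_lr_chi //; exact: le_trans h1 h2.
  - rewrite le_lr_psi // in h1; rewrite le_lr_psi //; exact: le_trans h1 h2.
  - exact: le_trans h1 h2.
have luniq : forall x y j j', is_lub S le x y j -> is_lub S le x y j' -> j = j'.
  move=> x y j j' [Sj [xj [yj Hj]]] [Sj' [xj' [yj' Hj']]].
  by apply: (anti) => //; [apply: Hj | apply: Hj'].
have guniq : forall x y j j', is_glb S le x y j -> is_glb S le x y j' -> j = j'.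
  move=> x y j j' [Sj [xj [yj Hj]]] [Sj' [xj' [yj' Hj']]].
  by apply: (anti) => //; [apply: Hj' | apply: Hj].
have SJ : forall p q, S p -> S q -> S (J p q) by move=> p q hp hq; case: (J_lub hp hq).
have SM : forall p q, S p -> S q -> S (M p q) by move=> p q hp hq; case: (M_glb hp hq).
have Jl : forall p q, S p -> S q -> le p (J p q) by move=> p q hp hq; case: (J_lub hp hq) => _ [].
have Jr : forall p q, S p -> S q -> le q (J p q) by move=> p q hp hq; case: (J_lub hp hq) => _ [_ []].
have Jleast : forall p q k, S p -> S q -> S k -> le p k -> le q k -> le (J p q) k.
  by move=> p q k hp hq; case: (J_lub hp hq) => _ [_ [_]]; apply.
have Ml : forall p q, S p -> S q -> le (M p q) p by move=> p q hp hq; case: (M_glb hp hq) => _ [].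
have Mr : forall p q, S p -> S q -> le (M p q) q by move=> p q hp hq; case: (M_glb hp hq) => _ [_ []].
have Mg : forall p q k, S p -> S q -> S k -> le k p -> le k q -> le k (M p q).
  by move=> p q k hp hq; case: (M_glb hp hq) => _ [_ [_]]; apply.
split; first by case=> [x|u] _ /=; exact: lexx.
split; first exact: anti.
split; first exact: trans.
split; first by move=> x y hx hy; exists (J x y); exact: J_lub.
split; first by move=> x y hx hy; exists (M x y); exact: M_glb.
move=> x y z m j k l Sx Sy Sz xz Hm Hk Hj Hl.
rewrite (guniq _ _ _ _ Hm (M_glb Sy Sz)) in Hk.
rewrite (luniq _ _ _ _ Hk (J_lub Sx (SM _ _ Sy Sz))).
rewrite (luniq _ _ _ _ Hj (J_lub Sx Sy)) in Hl.
rewrite (guniq _ _ _ _ Hl (M_glb (SJ _ _ Sx Sy) Sz)).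
set a := M y z; set s := J x a; set jj := J x y; set t := M jj z.
have Sa : S a by apply: (SM).
have Ss : S s by apply: (SJ).
have Sj : S jj by apply: (SJ).
have St : S t by apply: (SM).
have st : le s t.
  apply: (Jleast) => //.
  - by apply: (Mg) => //; apply: (Jl).
  - apply: (Mg) => //; last by apply: (Mr).
    by apply: (trans a y jj) => //; [apply: (Ml) | apply: (Jr)].
have SMs : S (M s y) by apply: (SM).
have SMt : S (M t y) by apply: (SM).
have SJs : S (J s y) by apply: (SJ).
have SJt : S (J t y) by apply: (SJ).
apply: (N5P Ss Sy St st).
- apply: (anti) => //.
  + apply: (Mg) => //; last by apply: (Mr).
    by apply: (trans _ s t) => //; apply: (Ml).
  + apply: (Mg) => //; last by apply: (Mr).
    apply: (trans _ a s) => //; last by apply: (Jr).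
    apply: (Mg) => //; first by apply: (Mr).
    by apply: (trans _ t z) => //; [apply: (Ml) | apply: (Mr)].
- apply: (anti) => //.
  + apply: (Jleast) => //; last by apply: (Jr).
    by apply: (trans s t) => //; apply: (Jl).
  + apply: (Jleast) => //; last by apply: (Jr).
    apply: (trans t jj) => //; first by apply: (Ml).
    apply: (Jleast) => //; last by apply: (Jr).
    by apply: (trans x s) => //; apply: (Jl).
Qed.

End Main.

Theorem lemma3p6 (d1 d2 : Order.disp_t)
  (L : finTBLatticeType d1) (U : finTBLatticeType d2)
  (c1 c2 : L) (a1 a2 : U) :
  modular L -> modular U ->
  (* L has exactly two coatoms, c1 and c2 *)
  c1 != c2 -> coatom c1 -> coatom c2 -> (forall c : L, coatom c -> c = c1 \/ c = c2) ->
  (* U has exactly two atoms, a1 and a2 *)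
  a1 != a2 -> atom a1 -> atom a2 -> (forall a : U, atom a -> a = a1 \/ a = a2) ->
  (* the vertical 2-sum identifying c1 with a1 and c2 with a2 is a modular lattice *)
  modular_lattice_on (fun p => vsum2_carrier a1 a2 p) (fun p q => vsum2_le c1 c2 a1 a2 p q).
Proof.
move=> mL mU c12 h1 h2 hc a12 ha1 ha2 ha.
by apply: main_thm.
Qed.
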